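(* Let $\mu,\psi,x>0$. If $$x>\frac{1}{2\sqrt2}-\frac{1+\sqrt2}{2\sqrt2}\,\frac{\log(2\psi\mu^2)}{\psi},$$ then $$e^{-\psi x}<\frac{\mu}{\sqrt{x+\frac12}}.$$ *)

(* Defs.v *)
From Stdlib Require Export Reals.

(* Main.v *)
Require Import Defs.
From Stdlib Require Import Reals Lra Psatz.
Open Scope R_scope.

Lemma e_gt : 1 + sqrt 2 < exp 1.
Proof.
  assert (Hs : sqrt 2 < 1.415).
  { apply Rsqr_incrst_0; try lra. rewrite Rsqr_sqrt; [unfold Rsqr; lra| lra].
    apply sqrt_pos. }
  assert (H4 : 1 + /4 < exp (/4)) by (apply exp_ineq1; lra).
  assert (E : exp 1 = exp (/4) * exp (/4) * (exp (/4) * exp (/4))).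
  { rewrite <- !exp_plus. apply f_equal. lra. }
  rewrite E. set (t := exp (/4)) in *.
  assert (T2 : 1.5625 < t * t) by nra.
  nra.
Qed.

Lemma key (y : R) : 0 < y -> ln y < y / (1 + sqrt 2).
Proof.
  intros hy. set (k := 1 + sqrt 2).
  assert (hk : 1 < k) by (unfold k; pose proof (sqrt_lt_R0 2); lra).
  assert (He := e_gt). fold k in He.
  apply exp_lt_inv. rewrite exp_ln by lra.
  assert (Z : 1 + (y/k - 1) <= exp (y/k - 1)).
  { destruct (Req_dec (y/k - 1) 0) as [E|E].
    - rewrite E, exp_0. lra.
    - left. apply exp_ineq1. exact E. }
  assert (Ex : exp (y/k) = exp (y/k - 1) * exp 1).
  { rewrite <- exp_plus. f_equal. lra. }
  rewrite Ex.
  assert (y / k * k = y) by (field; lra).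
  assert (0 < y / k) by (apply Rdiv_lt_0_compat; lra).
  nra.
Qed.

Theorem mainTheorem19 (mu psi x : R) (hmu : 0 < mu) (hpsi : 0 < psi) (hx : 0 < x)
  (h : x > 1 / (2 * sqrt 2)
           - (1 + sqrt 2) / (2 * sqrt 2) * (ln (2 * psi * mu ^ 2) / psi)) :
  exp (- psi * x) < mu / sqrt (x + 1 / 2).
Proof.
  set (s := sqrt 2) in *.
  assert (hs : 0 < s) by (apply sqrt_lt_R0; lra).
  set (L := ln (2 * psi * mu ^ 2)) in *.
  assert (hL : exp L = 2 * psi * mu ^ 2).
  { unfold L. rewrite exp_ln; [reflexivity|]. assert (0 < mu ^ 2) by (apply pow_lt; lra). apply Rmult_lt_0_compat; lra. }
  set (q := L / psi) in *.
  assert (hq : L = q * psi) by (unfold q; field; lra).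
  assert (h1 : 2 * s * x > 1 - (1 + s) * q).
  { replace (1 - (1 + s) * q) with (2 * s * (1 / (2 * s) - (1 + s) / (2 * s) * q))
      by (field; lra).
    apply Rmult_lt_compat_l; lra. }
  assert (h2 : (1 + s) * L > psi - 2 * s * psi * x) by (rewrite hq; nra).
  set (y := 2 * psi * (x + 1/2)).
  assert (hy : 0 < y) by (unfold y; nra).
  assert (hk := key y hy). fold s in hk.
  assert (hly : ln y < L + 2 * psi * x).
  { assert (y / (1 + s) * (1 + s) = y) by (field; lra).
    assert (y / (1 + s) <= L + 2 * psi * x); [|lra].
    apply (Rmult_le_reg_r (1 + s)); [lra|]. unfold y in *. nra. }
  assert (hm : exp (- psi * x) * exp (- psi * x) * y < 2 * psi * mu ^ 2).
  { rewrite <- hL, <- exp_plus. rewrite <- (exp_ln y) by lra.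
    rewrite <- exp_plus. apply exp_increasing. lra. }
  assert (hsq : 0 < sqrt (x + 1/2)) by (apply sqrt_lt_R0; lra).
  assert (hsq2 : sqrt (x + 1/2) * sqrt (x + 1/2) = x + 1/2) by (apply sqrt_sqrt; lra).
  apply (Rmult_lt_reg_r (sqrt (x + 1/2))); [lra|].
  replace (mu / sqrt (x + 1 / 2) * sqrt (x + 1 / 2)) with mu by (field; lra).
  set (a := exp (- psi * x) * sqrt (x + 1/2)).
  assert (ha : 0 < a) by (unfold a; pose proof (exp_pos (- psi * x)); nra).
  assert (a * a < mu * mu).
  { unfold a. replace (exp (- psi * x) * sqrt (x + 1 / 2) * (exp (- psi * x) * sqrt (x + 1 / 2)))
      with (exp (- psi * x) * exp (- psi * x) * (sqrt (x + 1/2) * sqrt (x + 1/2))) by ring.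
    rewrite hsq2. unfold y in hm. nra. }
  nra.
Qed.
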